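(* Let $\Gamma$ be a single edge $ab$ with label $m\ge3$, let $X$ be the Cayley complex of the standard presentation of $A_\Gamma$, and let $\Lambda\subset X$ be a hypergraph. Suppose $\gamma$ is an edge-path in $X$ whose first and last edges are vertices of $\Lambda$ and none of whose other edges is a vertex of $\Lambda$. Then the word read along $\gamma$ is not of the form $a^kba^l$, $b^kab^l$, or $a^kb^l$ with $k,l\in\mathbb{Z}\setminus\{0\}$.
   Context: For a labelled edge $ab$ with label $m$, $A_\Gamma=\langle a,b\mid p_m(a,b)=p_m(b,a)\rangle$ where $p_m(a,b)$ is the alternating word $aba\cdots$ of length $m$. The Cayley complex $X$ has vertex set $A_\Gamma$, a directed edge labelled $s$ from $g$ to $gs$ for $s\in\{a,b\}$, and a $2m$-gon $2$-cell glued along each closed path reading $p_m(a,b)p_m(b,a)^{-1}$. The word read along an edge-path records the label of each edge with exponent $+1$ or $-1$ according to whether it is traversed along or against its direction. Two edges of the boundary of a $2m$-gon are opposite if they are at distance $m-1$ along the boundary. A hypergraph in $X$ is a connected component of the graph whose vertices are the edges of $X$ and which has, for each $2$-cell $R$ and each pair of opposite edges of $\partial R$, an edge joining them. *)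

(* Defs.v *)
From mathcomp Require Import all_boot all_order all_algebra.
Set Implicit Arguments. Unset Strict Implicit. Unset Printing Implicit Defensive.

(* Generators: true = a, false = b.  A letter is (generator, exponent),
   exponent true = +1, false = -1.  Words over {a,b}^{+-1}. *)
Definition letter := (bool * bool)%type.
Definition word := seq letter.

Definition linv (x : letter) : letter := (x.1, ~~ x.2).
Definition winv (w : word) : word := rev (map linv w).

(* p_m(x, y) = x y x ... (length m), x a generator *)
Definition palt (m : nat) (x : bool) : word :=
  [seq (if odd i then ~~ x else x, true) | i <- iota 0 m].

Definition relator (m : nat) : word := palt m true ++ winv (palt m false).

(* Equality in A_Gamma = <a,b | p_m(a,b) = p_m(b,a)>: the congruence on
   words generated by free reduction and the defining relation. *)
Inductive weq (m : nat) : word -> word -> Prop :=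
| weq_refl w : weq m w w
| weq_sym u v : weq m u v -> weq m v u
| weq_trans u v w : weq m u v -> weq m v w -> weq m u w
| weq_free u v x : weq m (u ++ [:: x; linv x] ++ v) (u ++ v)
| weq_rel u v : weq m (u ++ palt m true ++ v) (u ++ palt m false ++ v).

(* An edge of the Cayley complex X: (g, s) is the edge labelled s from g to gs;
   g is given by a representative word. *)
Definition edge := (word * bool)%type.
Definition edge_eq (m : nat) (e e' : edge) : Prop := e.2 = e'.2 /\ weq m e.1 e'.1.

Definition path_edge (g w : word) (i : nat) : edge :=
  let x := nth (true, true) w i in
  let gi := g ++ take i w in
  if x.2 then (gi, x.1) else (gi ++ [:: (x.1, false)], x.1).

(* The 2-cell based at g has boundary the closed path from g reading the relator;
   its i-th boundary edge: *)
Definition cell_edge (m : nat) (g : word) (i : nat) : edge := path_edge g (relator m) i.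

(* Opposite edges of the 2m-gon: e_i and e_{i+m} (m-1 edges between them). *)
Definition hadj (m : nat) (e e' : edge) : Prop :=
  exists g i, i < m /\ edge_eq m e (cell_edge m g i) /\ edge_eq m e' (cell_edge m g (i + m)).

(* Same hypergraph: connected in the graph on edges of X generated by
   opposite-edge pairs (edges being identified up to equality in X). *)
Inductive hconn (m : nat) : edge -> edge -> Prop :=
| hconn_eq e e' : edge_eq m e e' -> hconn m e e'
| hconn_adj e e' : hadj m e e' -> hconn m e e'
| hconn_sym e e' : hconn m e e' -> hconn m e' e
| hconn_trans e1 e2 e3 : hconn m e1 e2 -> hconn m e2 e3 -> hconn m e1 e3.

Definition gpow (s : bool) (k : int) : word :=
  match k with
  | Posz n => nseq n (s, true)
  | Negz n => nseq n.+1 (s, false)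
  end.

(* Main.v *)
Require Import Defs.
From mathcomp Require Import all_boot all_order all_algebra ring zify.
Import GRing.Theory.
Local Open Scope ring_scope.
Set Implicit Arguments. Unset Strict Implicit.

Definition sg (R : comNzRingType) (e : bool) : R := if e then 1 else -1.
Definition acomp (R : comNzRingType) (p q : bool * R) : bool * R :=
  (p.1 == q.1, sg R p.1 * q.2 + p.2).
Definition lphi (R : comNzRingType) (s : bool) : bool * R := (false, if s then 0 else 1).
Definition phi (R : comNzRingType) (w : word) : bool * R :=
  foldr (fun x acc => @acomp R (lphi R x.1) acc) (true, 0) w.
Definition J (R : comNzRingType) (p : bool * R) (s : bool) : R :=
  2 * p.2 + sg R p.1 * (if s then 0 else 1).
Definition einv (R : comNzRingType) (e : edge) : R := @J R (phi R e.1) e.2.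

Lemma acompA (R : comNzRingType) (p q r : bool * R) :
  acomp p (acomp q r) = acomp (acomp p q) r.
Proof.
case: p q r => [[] a] [[] b] [[] c]; rewrite /acomp /sg /=; congr pair; ring.
Qed.

Lemma acomp1p (R : comNzRingType) (p : bool * R) : acomp (true, 0) p = p.
Proof. case: p => [[] a]; rewrite /acomp /sg /=; congr pair; ring. Qed.

Lemma acompp1 (R : comNzRingType) (p : bool * R) : acomp p (true, 0) = p.
Proof. case: p => [[] a]; rewrite /acomp /sg /=; congr pair; ring. Qed.

Lemma phi_cat (R : comNzRingType) (u v : word) :
  phi R (u ++ v) = acomp (phi R u) (phi R v).
Proof.
elim: u => [|x u IH] /=; first by rewrite acomp1p.
by rewrite IH acompA.
Qed.

Lemma phi_map (R : comNzRingType) (f : letter -> letter) (s : word) :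
  (forall x, (f x).1 = x.1) -> phi R (map f s) = phi R s.
Proof. by move=> hf; elim: s => [|x s IH] //=; rewrite IH hf. Qed.

Lemma lphiK (R : comNzRingType) s : acomp (lphi R s) (lphi R s) = (true, 0).
Proof. case: s; rewrite /acomp /sg /=; congr pair; ring. Qed.

Lemma palt_S n x : palt n.+1 x = (x, true) :: palt n (~~ x).
Proof.
rewrite /palt /=; have -> : iota 1 n = map (addn 1) (iota 0 n) by rewrite -iotaDl.
rewrite -map_comp; congr cons.
apply: eq_map => i /=; by case: (odd i); case: x.
Qed.

Lemma phi_palt (R : comNzRingType) n x :
  phi R (palt n x) = (~~ odd n, if x then - (n./2)%:R else (uphalf n)%:R).
Proof.
elim: n x => [|n IH] x; first by case: x; rewrite /= ?oppr0.
rewrite palt_S /= IH; case: x; rewrite /acomp /sg /=.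
  by rewrite mulN1r addr0; case: (odd n).
rewrite mulN1r opprK natr1; by case: (odd n).
Qed.

Lemma phi_weq (R : comNzRingType) m (hm0 : m%:R = 0 :> R) u v :
  weq m u v -> phi R u = phi R v.
Proof.
elim.
- by [].
- by move=> ? ? _ e; rewrite e.
- by move=> ? ? ? _ e1 _ e2; rewrite e1 e2.
- move=> u0 v0 x; rewrite !phi_cat.
  have -> : phi R [:: x; linv x] = (true, 0).
    by rewrite /phi /= /linv /= acompp1 lphiK.
  by rewrite acomp1p.
- move=> u0 v0; rewrite !phi_cat !phi_palt; congr (acomp _ (acomp _ _)); congr pair.
  have h := odd_double_half m; rewrite uphalf_half.
  have : ((odd m)%:R + (m./2)%:R * 2 = 0 :> R).
    by rewrite -hm0 -{3}h -muln2 natrD natrM.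
  move=> e; apply/eqP; rewrite -subr_eq0 -opprD; apply/eqP.
  rewrite natrD; apply/eqP; rewrite oppr_eq0; apply/eqP; rewrite -e; ring.
Qed.

Lemma sgM (R : comNzRingType) a b : sg R (a == b) = sg R a * sg R b.
Proof. by case: a; case: b; rewrite /sg /= ?mulr1 ?mul1r ?mulrNN ?mulr1. Qed.

Lemma J_comp (R : comNzRingType) (G P : bool * R) s :
  J (acomp G P) s = sg R G.1 * J P s + 2 * G.2.
Proof. rewrite /J /acomp /= sgM; ring. Qed.

Lemma J_lphi (R : comNzRingType) (P : bool * R) s :
  J (acomp P (lphi R s)) s = J P s.
Proof. case: P => e c; case: s; case: e; rewrite /J /acomp /lphi /sg /=; ring. Qed.

Lemma phi1 (R : comNzRingType) (x : letter) : phi R [:: x] = lphi R x.1.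
Proof. by rewrite /phi /= acompp1. Qed.

Lemma einv_path (R : comNzRingType) g w i :
  einv R (path_edge g w i) = J (phi R (g ++ take i w)) (nth (true, true) w i).1.
Proof.
rewrite /path_edge; case: (nth _ w i) => s [] //=.
by rewrite /einv /= phi_cat phi1 J_lphi.
Qed.

Local Close Scope ring_scope.
Lemma size_palt n x : size (palt n x) = n.
Proof. by rewrite /palt size_map size_iota. Qed.

Lemma nth_palt n x i d : i < n -> nth d (palt n x) i = (if odd i then ~~ x else x, true).
Proof. by move=> hi; rewrite /palt (nth_map 0%N) ?size_iota // nth_iota. Qed.

Lemma take_palt n x i : i <= n -> take i (palt n x) = palt i x.
Proof. by move=> hi; rewrite /palt -map_take take_iota (minn_idPl hi). Qed.

Lemma winv_palt n x :
  winv (palt n x) = map (fun l : letter => (l.1, false)) (palt n (if odd n then x else ~~ x)).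
Proof.
apply: (@eq_from_nth _ (true, true)); first by rewrite /winv size_rev size_map size_palt size_map size_palt.
rewrite /winv size_rev size_map size_palt => i hi.
rewrite nth_rev; last by rewrite size_map size_palt.
rewrite size_map size_palt (nth_map (true,true)); last by rewrite size_palt; lia.
rewrite (nth_map (true,true)) ?size_palt // !nth_palt //; last by lia.
rewrite /linv /=; congr pair.
rewrite oddB //=. case: (odd n); case: (odd i); case: x => //.
Qed.

Lemma cell_lo (R : comNzRingType) m g i : i < m ->
  einv R (cell_edge m g i) = J (acomp (phi R g) (phi R (palt i true))) (~~ odd i).
Proof.
move=> hi; rewrite /cell_edge einv_path /relator.
rewrite takel_cat ?size_palt; last by lia.
rewrite nth_cat size_palt hi nth_palt // take_palt; last by lia.
rewrite phi_cat; by case: (odd i).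
Qed.

Lemma cell_hi (R : comNzRingType) m g i : i < m ->
  einv R (cell_edge m g (i + m)) =
  J (acomp (phi R g) (acomp (phi R (palt m true)) (phi R (palt i (~~ odd m)))))
    (if odd i then odd m else ~~ odd m).
Proof.
move=> hi; rewrite /cell_edge einv_path /relator.
rewrite take_cat nth_cat size_palt ltnNge leq_addl /= addnK winv_palt.
rewrite -map_take take_palt; last by lia.
rewrite (nth_map (true,true)) ?size_palt // nth_palt // !phi_cat phi_map //=.
by case: (odd i); case: (odd m).
Qed.

Local Open Scope ring_scope.

Lemma key (R : comNzRingType) m (hm0 : m%:R = 0 :> R) i :
  J (phi R (palt i true)) (~~ odd i) =
  J (acomp (phi R (palt m true)) (phi R (palt i (~~ odd m)))) (if odd i then odd m else ~~ odd m).
Proof.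
rewrite J_comp !phi_palt uphalf_half.
have e : ((odd m)%:R + (m./2)%:R * 2 = 0 :> R).
  by rewrite -hm0 -{3}(odd_double_half m) -muln2 natrD natrM.
move: e; case: (odd i); case: (odd m) => /= e; rewrite /J /sg /=;
  apply/eqP; rewrite -subr_eq0; apply/eqP; apply: (etrans _ e); rewrite ?natrD; ring.
Qed.

Lemma einv_eq (R : comNzRingType) m (hm0 : m%:R = 0 :> R) e e' :
  edge_eq m e e' -> einv R e = einv R e'.
Proof. by case: e e' => [v s] [v' s'] [/= -> h]; rewrite /einv /= (phi_weq hm0 h). Qed.

Lemma hconn_inv (R : comNzRingType) m (hm0 : m%:R = 0 :> R) e e' :
  hconn m e e' -> einv R e = einv R e'.
Proof.
elim.
- by move=> ? ?; apply: einv_eq.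
- move=> e1 e2 [g [i [hi [h1 h2]]]].
  rewrite (einv_eq hm0 h1) (einv_eq hm0 h2) cell_lo // cell_hi //.
  by rewrite !J_comp (key hm0) J_comp.
- by move=> ? ? _ ->.
- by move=> ? ? ? _ -> _ ->.
Qed.

Local Close Scope ring_scope.

Lemma phi_nseq (R : comNzRingType) n (x : letter) :
  phi R (nseq n x) = if odd n then lphi R x.1 else (true, 0%R).
Proof.
elim: n => [|n IH] //=; rewrite -/(phi R (nseq n x)) IH.
by case: (odd n) => /=; rewrite ?lphiK ?acompp1.
Qed.

Lemma last_nseq1 n (x y : letter) : last y (nseq n.+1 x) = x.
Proof. by elim: n y => //= n IH y; rewrite IH. Qed.

Lemma gpowE s (k : int) : k != 0%R -> exists n e, gpow s k = nseq n.+1 (s, e).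
Proof. case: k => [[|n]|n] //= _; by eexists; eexists. Qed.

Lemma ends (R : comNzRingType) m (hm0 : (m%:R = 0 :> R)%R) g w : 0 < size w ->
  hconn m (path_edge g w 0) (path_edge g w (size w).-1) ->
  J (true, 0%R) (nth (true, true) w 0).1 = J (phi R w) (last (true, true) w).1.
Proof.
case/lastP: w => [//|u x] _ /(hconn_inv (R:=R) hm0).
rewrite !einv_path take0 cats0 size_rcons /= -cats1 take_size_cat // (nth_cat _ _ _ (size u)) ltnn subnn /= !cats1 last_rcons.
rewrite -(J_lphi (phi R (g ++ u))) -phi1 -phi_cat -catA cats1 phi_cat.
rewrite -{1}(acompp1 (phi R g)) !J_comp => h.
have : (sg R (phi R g).1 * (sg R (phi R g).1 * J (true, 0%R) (nth (true, true) (rcons u x) 0).1)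
   = sg R (phi R g).1 * (sg R (phi R g).1 * J (phi R (rcons u x)) x.1))%R.
  by rewrite (addIr _ h).
by rewrite !mulrA; case: (phi R g).1; rewrite /sg ?mulr1 ?mulrNN ?mulr1 ?mul1r.
Qed.

Lemma Z2 m : 3 <= m -> (2%:R : 'Z_m)%R != 0%R.
Proof.
move=> hm; apply/eqP => e; have hm1 : 1 < m by lia.
have := @val_Zp_nat m hm1 2; rewrite e /= modn_small //; lia.
Qed.

Ltac fin m hm h :=
  let h' := fresh in
  move/eqP: h; rewrite -subr_eq0 => /eqP h';
  first [ have : (2%:R : 'Z_m)%R = 0%R by rewrite -h'; ring
        | have : (2%:R : 'Z_m)%R = 0%R by rewrite -oppr0 -h'; ring
        | have : (1 : 'Z_m)%R = 0%R by rewrite -h'; ring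
        | have : (1 : 'Z_m)%R = 0%R by rewrite -oppr0 -h'; ring ];
  [ move/eqP; rewrite ?oner_eq0 ?(negbTE (Z2 hm)) // ].

(* The hypergraph Lambda is the component {e | hconn m e0 e} of the edge e0. *)
Theorem lemma4p4 (m : nat) (hm : 3 <= m) (e0 : edge) (g w : word)
  (hw : 0 < size w)
  (hfirst : hconn m e0 (path_edge g w 0))
  (hlast : hconn m e0 (path_edge g w (size w).-1))
  (hmid : forall i, 0 < i -> i < (size w).-1 -> ~ hconn m e0 (path_edge g w i)) :
  ~ (exists k l : int, k != 0 /\ l != 0 /\
       (w = gpow true k ++ [:: (false, true)] ++ gpow true l
        \/ w = gpow false k ++ [:: (true, true)] ++ gpow false l
        \/ w = gpow true k ++ gpow false l)).
Proof.
move=> [k [l [hk [hl hw']]]].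
have hm1 : 1 < m by lia.
have hm0 : (m%:R : 'Z_m)%R = 0%R := pchar_Zp hm1.
have h := ends hm0 hw (hconn_trans (hconn_sym hfirst) hlast).
case: hw' => [|[|]] hw'; rewrite {}hw' in h.
- case: (gpowE true hk) => n1 [e1 e1E]; case: (gpowE true hl) => n2 [e2 e2E].
  rewrite e1E e2E !last_cat last_nseq1 !phi_cat !phi_nseq phi1 /= in h.
  move: h; case: (odd n1); case: (odd n2);
    rewrite /J /acomp /lphi /sg /= => h; fin m hm h.
- case: (gpowE false hk) => n1 [e1 e1E]; case: (gpowE false hl) => n2 [e2 e2E].
  rewrite e1E e2E !last_cat last_nseq1 !phi_cat !phi_nseq phi1 /= in h.
  move: h; case: (odd n1); case: (odd n2);
    rewrite /J /acomp /lphi /sg /= => h; fin m hm h.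
- case: (gpowE true hk) => n1 [e1 e1E]; case: (gpowE false hl) => n2 [e2 e2E].
  rewrite e1E e2E !last_cat last_nseq1 !phi_cat !phi_nseq /= in h.
  move: h; case: (odd n1); case: (odd n2);
    rewrite /J /acomp /lphi /sg /= => h; fin m hm h.
Qed.
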